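(* Let $G$ be a left-orderable group acting on its space $\mathcal{LO}(G)$ of left-orderings by conjugation. Then every left-ordering whose orbit under this action is finite is Conradian.
   Context: A left-ordering is a total order invariant under left multiplication; it is Conradian if for all $f\succ id$, $g\succ id$ there is $n\in\mathbb{N}$ with $fg^n\succ g$. The action of $g\in G$ sends $\preceq$ to $\preceq_g$, defined by $h\succ_g f$ iff $ghg^{-1}\succ gfg^{-1}$. *)

(* Defs.v *)
From Stdlib Require Import List.

Definition is_group {G : Type} (mul : G -> G -> G) (e : G) (inv : G -> G) : Prop :=
  (forall a b c, mul a (mul b c) = mul (mul a b) c) /\
  (forall a, mul e a = a) /\ (forall a, mul a e = a) /\
  (forall a, mul (inv a) a = e) /\ (forall a, mul a (inv a) = e).

Definition gpow {G : Type} (mul : G -> G -> G) (e : G) (g : G) (n : nat) : G :=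
  Nat.iter n (fun x => mul x g) e.

Definition is_left_ordering {G : Type} (mul : G -> G -> G) (lt : G -> G -> Prop) : Prop :=
  (forall a, ~ lt a a) /\
  (forall a b c, lt a b -> lt b c -> lt a c) /\
  (forall a b, lt a b \/ a = b \/ lt b a) /\
  (forall g a b, lt a b -> lt (mul g a) (mul g b)).

Definition conradian {G : Type} (mul : G -> G -> G) (e : G) (lt : G -> G -> Prop) : Prop :=
  forall f g, lt e f -> lt e g -> exists n : nat, lt g (mul f (gpow mul e g (S n))).

Definition conj_act {G : Type} (mul : G -> G -> G) (inv : G -> G) (g : G)
  (lt : G -> G -> Prop) : G -> G -> Prop :=
  fun f h => lt (mul (mul g f) (inv g)) (mul (mul g h) (inv g)).

Definition finite_orbit {G : Type} (mul : G -> G -> G) (inv : G -> G)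
  (lt : G -> G -> Prop) : Prop :=
  exists l : list (G -> G -> Prop), forall g, In (conj_act mul inv g lt) l.

(* Main.v *)
Require Import Defs.
From Stdlib Require Import List Arith Lia Classical.

Lemma pigeon_nat {A : Type} (l : list A) (F : nat -> A) :
  (forall i, In (F i) l) -> exists i j, i < j /\ F i = F j.
Proof.
  intros H. apply NNPP. intros Hn.
  assert (Hinj : forall i j, F i = F j -> i = j).
  { intros i j Hij. destruct (lt_eq_lt_dec i j) as [[h|h]|h]; auto.
    - exfalso; apply Hn; eauto.
    - exfalso; apply Hn; exists j, i; auto. }
  assert (HN : NoDup (map F (seq 0 (S (length l))))).
  { apply NoDup_map_NoDup_ForallPairs. intros x y _ _; apply Hinj. apply seq_NoDup. }
  assert (Hi : incl (map F (seq 0 (S (length l)))) l).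
  { intros x Hx. apply in_map_iff in Hx. destruct Hx as [k [<- _]]. apply H. }
  pose proof (NoDup_incl_length HN Hi) as Hl.
  rewrite length_map, length_seq in Hl. lia.
Qed.

Lemma gpow_add {G : Type} (mul : G -> G -> G) (e : G) (inv : G -> G)
  (HG : is_group mul e inv) (g : G) (a b : nat) :
  gpow mul e g (a + b) = mul (gpow mul e g a) (gpow mul e g b).
Proof.
  destruct HG as [Ha [Hl [Hr _]]].
  induction b.
  - rewrite Nat.add_0_r. simpl. rewrite Hr. reflexivity.
  - rewrite Nat.add_succ_r. unfold gpow in *. simpl. rewrite IHb. apply eq_sym, Ha.
Qed.

Lemma inv_mul {G : Type} (mul : G -> G -> G) (e : G) (inv : G -> G)
  (HG : is_group mul e inv) (x y : G) : inv (mul x y) = mul (inv y) (inv x).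
Proof.
  destruct HG as [Ha [Hl [Hr [Hil Hir]]]].
  assert (H : mul (mul x y) (mul (inv y) (inv x)) = e).
  { rewrite <- Ha. rewrite (Ha y). rewrite Hir, Hl. apply Hir. }
  transitivity (mul (inv (mul x y)) e); [rewrite Hr; reflexivity|].
  rewrite <- H. rewrite Ha, Hil, Hl. reflexivity.
Qed.

Lemma gpow_pos {G : Type} (mul : G -> G -> G) (e : G) (lt : G -> G -> Prop)
  (Hlt : is_left_ordering mul lt) (inv : G -> G) (HG : is_group mul e inv) (g : G) :
  lt e g -> forall k, lt e (gpow mul e g (S k)).
Proof.
  intros Hg. destruct Hlt as [Hirr [Htr [Htot Hinv]]].
  destruct HG as [Ha [Hl [Hr [Hil Hir]]]].
  induction k.
  - unfold gpow; simpl. rewrite Hl. exact Hg.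
  - eapply Htr. exact IHk.
    pose proof (Hinv (gpow mul e g (S k)) e g Hg) as H. rewrite Hr in H.
    exact H.
Qed.

Theorem mainTheorem20 (G : Type) (mul : G -> G -> G) (e : G) (inv : G -> G)
  (HG : is_group mul e inv)
  (Hlo : exists lt0 : G -> G -> Prop, is_left_ordering mul lt0)
  (lt : G -> G -> Prop) (Hlt : is_left_ordering mul lt)
  (Hfin : finite_orbit mul inv lt) :
  conradian mul e lt.
Proof.
  intros f g Hf Hg.
  destruct Hfin as [l Hl].
  destruct (pigeon_nat l (fun i => conj_act mul inv (gpow mul e g i) lt)
              (fun i => Hl _)) as [i [j [Hij HP]]].
  simpl in HP.
  replace j with ((j - i) + i) in HP by lia.
  remember (j - i) as d eqn:Hd.
  destruct d as [|n]; [lia|].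
  exists n.
  set (c := gpow mul e g (S n)) in *.
  set (a := gpow mul e g i) in *.
  rewrite (gpow_add mul e inv HG g (S n) i) in HP. fold c a in HP.
  pose proof (inv_mul mul e inv HG c a) as Hinvca.
  pose proof (f_equal (fun P => P e (mul (inv (mul c a)) (mul f (mul c a)))) HP) as Hk.
  unfold conj_act in Hk.
  destruct HG as [Ha [Hle [Hre [Hil Hir]]]].
  assert (Hc1 : forall x y, mul (inv x) (mul x y) = y).
  { intros x y. rewrite Ha, Hil, Hle. reflexivity. }
  assert (Hc2 : forall x y, mul x (mul (inv x) y) = y).
  { intros x y. rewrite Ha, Hir, Hle. reflexivity. }
  rewrite Hinvca in Hk.
  repeat (rewrite <- ?Ha in Hk; rewrite ?Hre, ?Hle, ?Hir, ?Hil, ?Hc1, ?Hc2 in Hk).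
  (* Hk : lt e (inv c (f c)) = lt e f *)
  assert (H1 : lt e (mul (inv c) (mul f c))).
  { rewrite Hk. exact Hf. }
  destruct Hlt as [Hirr [Htr [Htot Hlinv]]] eqn:HLT.
  pose proof (Hlinv c _ _ H1) as H2. rewrite Hre, Hc2 in H2.
  assert (Hgc : g = c \/ lt g c).
  { unfold c. replace (S n) with (1 + n) by lia.
    rewrite (gpow_add mul e inv (conj Ha (conj Hle (conj Hre (conj Hil Hir)))) g 1 n).
    unfold gpow at 1; simpl. rewrite Hle.
    destruct n as [|n'].
    - left. unfold gpow; simpl. rewrite Hre. reflexivity.
    - right. pose proof (gpow_pos mul e lt Hlt inv
               (conj Ha (conj Hle (conj Hre (conj Hil Hir)))) g Hg n') as Hp.
      pose proof (Hlinv g _ _ Hp) as Hq. rewrite Hre in Hq. exact Hq. }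
  destruct Hgc as [<-|Hgc]; [exact H2|].
  eapply Htr; eassumption.
Qed.
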